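(* Let $G=(L\cup R,E)$ be a $(c,d)$-regular bipartite graph with $L=[n]$, $C_0\subseteq\mathbb{F}_2^d$ a linear code of minimum distance $d_0$, $t=d_0/2$, $x\in\mathbb{F}_2^n$, $y\in T(G,C_0)$ and $F=\{i\in[n]:x_i\ne y_i\}$. Then the number of $i\in[n]\setminus F$ such that $p_i>0$ at the end of $\mathsf{RandFlip}(x)$ is at most $\frac ct|F|$. In particular, for $x'=\mathsf{RandFlip}(x)$, one always has $d_H(x',y)\le\left(1+\frac ct\right)d_H(x,y)$.
   Context: A bipartite graph is $(c,d)$-regular if left degrees are $c$ and right degrees $d$. Tanner code: $L=[n]$, for each $v\in R$ a fixed ordering of $N(v)$ defines $x_{N(v)}\in\mathbb{F}_2^d$, and $T(G,C_0)=\{x:x_{N(v)}\in C_0\ \forall v\in R\}$. $d_H$ is Hamming distance. $\mathsf{Decode}(z)$ for $z\in\mathbb{F}_2^d$ is the codeword of $C_0$ closest to $z$, ties broken lexicographically. $\mathsf{RandFlip}(x)$: set $t=d_0/2$ and $p_1=\dots=p_n=0$; for each $v\in R$, let $w_v=\mathsf{Decode}(x_{N(v)})$; if $1\le d_H(w_v,x_{N(v)})<t$, let $i$ be the smallest element of $N(v)$ at which $w_v$ and $x_{N(v)}$ differ and increase $p_i$ by $\frac{t-d_H(w_v,x_{N(v)})}{ct}$. Then flip each $x_i$ independently with probability $p_i$ and return the result. *)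

(* Defs.v *)
From mathcomp Require Import all_boot all_order all_algebra.
Set Implicit Arguments. Unset Strict Implicit. Unset Printing Implicit Defensive.
Import Order.TTheory GRing.Theory Num.Theory.
Local Open Scope ring_scope.

Definition dH (m : nat) (x y : 'rV['F_2]_m) : nat := #|[set j | x ord0 j != y ord0 j]|.

(* Linear code over F_2: contains 0 and closed under addition
   (scalar multiplication by 0/1 is then automatic). *)
Definition linear_code (m : nat) (C : {set 'rV['F_2]_m}) : Prop :=
  0 \in C /\ {in C &, forall u v, u + v \in C}.

Definition min_dist (m : nat) (C : {set 'rV['F_2]_m}) (d0 : nat) : Prop :=
  (exists u v, [/\ u \in C, v \in C, u != v & dH u v = d0]) /\
  {in C &, forall u v, u != v -> (d0 <= dH u v)%N}.

(* Bipartite graph G = (L u R, E) with L = 'I_n, R a finite type;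
   nbr v : 'I_d -> 'I_n is the fixed ordering of N(v).
   (c,d)-regular: each nbr v is injective (so |N(v)| = d) and every left
   vertex lies in exactly c neighbourhoods. *)
Definition cd_regular (n d c : nat) (R : finType) (nbr : R -> 'I_d -> 'I_n) : Prop :=
  (forall v, injective (nbr v)) /\
  (forall i : 'I_n, #|[set v | i \in codom (nbr v)]| = c).

Definition restr (n d : nat) (nbr : 'I_d -> 'I_n) (x : 'rV['F_2]_n) : 'rV['F_2]_d :=
  \row_j x ord0 (nbr j).

Definition tanner (n d : nat) (R : finType) (nbr : R -> 'I_d -> 'I_n)
  (C0 : {set 'rV['F_2]_d}) : {set 'rV['F_2]_n} :=
  [set x | [forall v, restr (nbr v) x \in C0]].

(* Lexicographic rank of a word: the binary number whose most significant
   bit is coordinate 0 (so the lexicographic order on words of length m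
   coincides with the order on lex_rank). *)
Definition lex_rank (m : nat) (w : 'rV['F_2]_m) : nat :=
  (\sum_(j < m) ((w ord0 j != 0%R) : nat) * 2 ^ (m.-1 - j))%N.

(* Sort key: first Hamming distance to z, then lexicographic order. *)
Definition dec_key (m : nat) (z w : 'rV['F_2]_m) : nat :=
  (dH w z * 2 ^ m + lex_rank w)%N.

Definition Decode (m : nat) (C0 : {set 'rV['F_2]_m}) (z : 'rV['F_2]_m) : 'rV['F_2]_m :=
  [arg min_(w < 0 in C0) dec_key z w].

(* Smallest element (of [n]) of N(v) at which two words differ;
   n if they agree everywhere. *)
Definition first_diff (n d : nat) (nbr : 'I_d -> 'I_n) (w z : 'rV['F_2]_d) : nat :=
  \big[minn/n]_(j < d | w ord0 j != z ord0 j) (nbr j : nat).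

Definition randflip_p (n d c : nat) (R : finType) (nbr : R -> 'I_d -> 'I_n)
  (C0 : {set 'rV['F_2]_d}) (d0 : nat) (x : 'rV['F_2]_n) (i : 'I_n) : rat :=
  let t : rat := d0%:R / 2 in
  \sum_(v : R |
         let xv := restr (nbr v) x in
         let wv := Decode C0 xv in
         [&& (1 <= dH wv xv)%N, ((dH wv xv)%:R < t)%R
           & (i : nat) == first_diff (nbr v) wv xv])
     (t - (dH (Decode C0 (restr (nbr v) x)) (restr (nbr v) x))%:R) / (c%:R * t).

(* Support of the output of RandFlip(x): each x_i is flipped independently
   with probability p_i, so x' is a possible output iff x'_i = x_i whenever
   p_i = 0 and x'_i <> x_i whenever p_i >= 1. *)
Definition randflip_outcome (n d c : nat) (R : finType) (nbr : R -> 'I_d -> 'I_n)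
  (C0 : {set 'rV['F_2]_d}) (d0 : nat) (x x' : 'rV['F_2]_n) : Prop :=
  forall i : 'I_n,
    (randflip_p c nbr C0 d0 x i = 0 -> x' ord0 i = x ord0 i) /\
    (1 <= randflip_p c nbr C0 d0 x i -> x' ord0 i != x ord0 i).

(* Main.v *)
Require Import Defs.
From mathcomp Require Import all_boot all_order all_algebra.
From mathcomp Require Import lra.
Import Order.TTheory GRing.Theory Num.Theory.

Lemma dH_tri m (a b e : 'rV['F_2]_m) : (dH a e <= dH a b + dH b e)%N.
Proof.
rewrite /dH.
apply: (leq_trans (subset_leq_card (_ : _ \subset
   [set j | a ord0 j != b ord0 j] :|: [set j | b ord0 j != e ord0 j]))).
  apply/subsetP => j; rewrite !inE.
  by case: (a ord0 j =P b ord0 j) => //= ->.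
by rewrite cardsU leq_subr.
Qed.

Lemma dH_pos m (u v : 'rV['F_2]_m) : u != v -> (0 < dH u v)%N.
Proof.
move=> neq; rewrite /dH card_gt0; apply: contraNneq neq => H.
apply/eqP/matrixP => i j; rewrite [i]ord1; apply/eqP.
have := congr1 (fun A : {set 'I_m} => j \in A) H; rewrite !inE /=.
by move/negbFE.
Qed.

Lemma first_diff_spec n d (nbr : 'I_d -> 'I_n) (w z : 'rV['F_2]_d) :
  first_diff nbr w z = n \/
  exists j, w ord0 j != z ord0 j /\ (nbr j : nat) = first_diff nbr w z.
Proof.
rewrite /first_diff.
apply: (big_rec (fun m => m = n \/ exists j, w ord0 j != z ord0 j /\ (nbr j : nat) = m)).
  by left.
move=> j m Pj [->|[k [Pk <-]]]; rewrite /minn; case: ifP => _;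
  first [by left | by right; exists j | by right; exists k].
Qed.

Lemma dH_restr n d (nbr : 'I_d -> 'I_n) (x y : 'rV['F_2]_n) :
  injective nbr ->
  dH (restr nbr x) (restr nbr y) =
  #|[set i | (x ord0 i != y ord0 i) && (i \in codom nbr)]|.
Proof.
move=> inj; rewrite /dH -(card_imset _ inj); apply: eq_card => i; rewrite [in RHS]inE; apply/imsetP/andP.
  by case=> j; rewrite inE !mxE => ne ->; split => //; exact: codom_f.
by case=> ne /codomP [j ej]; exists j => //; rewrite inE !mxE -ej.
Qed.

Lemma count_lemma n d c (R : finType) (nbr : R -> 'I_d -> 'I_n) (F : {set 'I_n}) :
  (forall i : 'I_n, #|[set v | i \in codom (nbr v)]| = c) ->
  (\sum_v #|[set i | (i \in F) && (i \in codom (nbr v))]| = c * #|F|)%N.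
Proof.
move=> reg.
transitivity (\sum_v \sum_i (((i \in F) && (i \in codom (nbr v))) : nat))%N.
  apply: eq_bigr => v _; rewrite -sum1_card [LHS]big_mkcond /=.
  by apply: eq_bigr => i _; rewrite inE; case: (_ && _).
rewrite exchange_big /=.
transitivity (\sum_i ((i \in F) : nat) * c)%N.
  apply: eq_bigr => i _; case: (i \in F) => /=.
    rewrite mul1n -(reg i) -sum1_card [RHS]big_mkcond /=.
    by apply: eq_bigr => v _; rewrite inE; case: ifP.
  by rewrite big1.
rewrite -big_distrl /= mulnC; congr (_ * _)%N.
by rewrite -sum1_card [RHS]big_mkcond /=; apply: eq_bigr => i _; case: (i \in F).
Qed.

Theorem lemma3p4 (n d c : nat) (R : finType) (nbr : R -> 'I_d -> 'I_n)
  (C0 : {set 'rV['F_2]_d}) (d0 : nat) (x y : 'rV['F_2]_n) :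
  cd_regular c nbr ->
  linear_code C0 ->
  min_dist C0 d0 ->
  y \in tanner nbr C0 ->
  let t : rat := (d0%:R / 2)%R in
  let F := [set i : 'I_n | x ord0 i != y ord0 i] in
  ((#|[set i in ~: F | (0 < randflip_p c nbr C0 d0 x i)%R]|%:R
      <= c%:R / t * #|F|%:R)%R
   /\ forall x' : 'rV['F_2]_n, randflip_outcome c nbr C0 d0 x x' ->
      ((dH x' y)%:R <= (1 + c%:R / t) * (dH x y)%:R :> rat)%R).
Proof.
move=> [inj reg] [C00 _] [[u [v [uC vC uv duv]]] mind] yT t F.
have d0pos : (0 < d0)%N by rewrite -duv dH_pos.
have tpos : (0 < t)%R by rewrite /t divr_gt0 // ltr0n.
set p := randflip_p c nbr C0 d0 x.
pose xv w := restr (nbr w) x.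
pose wv w := Decode C0 (xv w).
pose yv w := restr (nbr w) y.
have p_ge0 : forall i, (0 <= p i)%R.
  move=> i; rewrite /p /randflip_p; apply: sumr_ge0 => w /and3P [_ lt _].
  by apply: divr_ge0; [rewrite subr_ge0 ltW | rewrite mulr_ge0 // ltW].
have pP : forall i, (0 < p i)%R -> exists w,
    [&& (1 <= dH (wv w) (xv w))%N, ((dH (wv w) (xv w))%:R < t)%R
      & (i : nat) == first_diff (nbr w) (wv w) (xv w)].
  move=> i; rewrite /p /randflip_p.
  case: (pickP (fun w => [&& (1 <= dH (wv w) (xv w))%N, ((dH (wv w) (xv w))%:R < t)%R
      & (i : nat) == first_diff (nbr w) (wv w) (xv w)])) => [w Pw _| none].
    by exists w.
  by rewrite big_pred0 ?ltxx.
have Vbound : forall (i : 'I_n) w,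
    [&& (1 <= dH (wv w) (xv w))%N, ((dH (wv w) (xv w))%:R < t)%R
      & (i : nat) == first_diff (nbr w) (wv w) (xv w)] ->
    i \notin F -> (t < (dH (xv w) (yv w))%:R)%R.
  move=> i w /and3P [_ lt /eqP ei] iF.
  have wC : wv w \in C0 by rewrite /wv /Decode; case: arg_minnP.
  have yC : yv w \in C0 by move: yT; rewrite inE => /forallP /(_ w).
  have wy : wv w != yv w.
    case: (@first_diff_spec _ _ (nbr w) (wv w) (xv w)) => [eqn | [j [ne ej]]].
      by have := ltn_ord i; rewrite ei eqn ltnn.
    apply: contraNneq ne => ->.
    rewrite /yv /xv !mxE.
    have -> : nbr w j = i by apply: val_inj; rewrite /= ej -ei.
    rewrite inE negbK in iF.
    by rewrite eq_sym.
  have h1 := mind _ _ wC yC wy.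
  have h2 := @dH_tri _ (wv w) (xv w) (yv w).
  have h3 : ((d0%:R : rat) <= (dH (wv w) (xv w))%:R + (dH (xv w) (yv w))%:R)%R.
    by rewrite -natrD ler_nat (leq_trans h1 h2).
  rewrite /t in lt *; lra.
set V := [set w | (t < (dH (xv w) (yv w))%:R)%R].
have VF : (#|V|%:R * t <= (c * #|F|)%:R :> rat)%R.
  rewrite -(@count_lemma _ _ _ _ _ F reg).
  rewrite (eq_bigr (fun w => dH (xv w) (yv w))); last first.
    by move=> w _; rewrite /xv /yv (@dH_restr _ _ _ x y (inj w)); apply: eq_card => i; rewrite !inE.
  rewrite natr_sum.
  apply: (@le_trans _ _ (\sum_(w in V) ((dH (xv w) (yv w))%:R : rat))%R).
    rewrite (_ : (#|V|%:R * t = \sum_(w in V) t)%R); last by rewrite sumr_const mulr_natl.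
    apply: ler_sum => w.
    by rewrite inE => /ltW.
  rewrite [X in (_ <= X)%R](bigID (mem V)) /= lerDl.
  by apply: sumr_ge0 => w _; exact: ler0n.
set I := [set i in ~: F | (0 < p i)%R].
have IV : (#|I| <= #|V|)%N.
  case: (set_0Vmem I) => [-> | [i0 _]]; first by rewrite cards0.
  pose f w := insubd i0 (first_diff (nbr w) (wv w) (xv w)) : 'I_n.
  apply: leq_trans (leq_imset_card f V).
  apply: subset_leq_card; apply/subsetP => i; rewrite inE => /andP [iF pi].
  have [w Pw] := pP i pi.
  apply/imsetP; exists w.
    by rewrite inE; apply: (Vbound i w Pw); rewrite inE in iF.
  apply: val_inj; rewrite val_insubd.
  by case/and3P: Pw => _ _ /eqP <-; rewrite ltn_ord.
have part1 : (#|I|%:R <= c%:R / t * #|F|%:R :> rat)%R.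
  rewrite mulrAC ler_pdivlMr // -natrM.
  apply: le_trans VF.
  apply: ler_wpM2r; first exact: ltW.
  by rewrite ler_nat.
split => // x' out.
have sub : [set j | x' ord0 j != y ord0 j] \subset F :|: I.
  apply/subsetP => i; rewrite !inE.
  case: (boolP (x ord0 i != y ord0 i)) => //= xy x'y.
  rewrite lt_def p_ge0 andbT.
  apply/eqP => p0.
  have x'i := (out i).1 p0.
  move: x'y; rewrite x'i.
  by move/negbNE: xy => ->.
have h : (dH x' y <= #|F| + #|I|)%N.
  rewrite /dH; apply: leq_trans (subset_leq_card sub) _.
  by rewrite cardsU leq_subr.
have -> : dH x y = #|F| by [].
apply: (@le_trans _ _ (#|F|%:R + #|I|%:R)%R).
  by rewrite -natrD ler_nat.
by rewrite mulrDl mul1r lerD2l.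
Qed.
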